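(* Assume that $f_a(0)=\lim_{u\downarrow0}f_a(u)$ is finite for every $a\in A$. Let $\theta\in\mathbb R^n$ and $p^*\in\mathcal M_1^+(A)$ with $I(p^* )-\sum_j\theta_j\langle p^*,H_j\rangle$ finite. The following are equivalent: (1) $p^*$ satisfies the variational principle with parameters $\theta$; (2) there exist $\alpha\in\mathbb R$ and a subset $A_0\subseteq A$ such that (i) $f_a(p^*_a)=-\alpha-\sum_{j=1}^n\theta_jH_j(a)$ for all $a\in A\setminus A_0$; (ii) $p^*_a=0$ for all $a\in A_0$; (iii) $f_a(0)+\sum_{j=1}^n\theta_jH_j(a)\ge-\alpha$ for all $a\in A_0$.
   Context: Let $A$ be a finite or countable set and $\mathcal M_1^+(A)$ the set of probability distributions $p=(p_a)_{a\in A}$ on $A$. For each $a\in A$ let $h_a:[0,1]\to\mathbb R$ be continuous and strictly concave with $h_a(0)=h_a(1)=0$, differentiable on $(0,1)$ with $h_a'(u)=-f_a(u)$, where $f_a$ extends to a continuous (necessarily strictly increasing) function on $(0,1]$; put $f_a(0)=\lim_{u\downarrow0}f_a(u)\in[-\infty,\infty)$. The generalised entropy is $I(p)=\sum_{a\in A}h_a(p_a)\in[0,+\infty]$. Let $H_1,\dots,H_n:A\to\mathbb R$ be functions bounded from below, and write $\langle p,X\rangle=\sum_{a}p_aX(a)$. A distribution $p^*\in\mathcal M_1^+(A)$ satisfies the variational principle with parameters $\theta=(\theta_1,\dots,\theta_n)\in\mathbb R^n$ if $+\infty> I(p^* )-\sum_{j=1}^n\theta_j\langle p^*,H_j\rangle\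 \ge\ I(p)-\sum_{j=1}^n\theta_j\langle p,H_j\rangle$ for all $p\in\mathcal M_1^+(A)$. *)

(* Defs.v *)
From Stdlib Require Import Reals Lra List ClassicalEpsilon.
Open Scope R_scope.

Inductive ER := Fin (r : R) | PInf | MInf.

Definition ele (x y : ER) : Prop :=
  match x, y with
  | MInf, _ => True
  | _, PInf => True
  | Fin a, Fin b => a <= b
  | _, _ => False
  end.

Definition eadd (x y : ER) : option ER :=
  match x, y with
  | Fin a, Fin b => Some (Fin (a + b))
  | PInf, MInf | MInf, PInf => None
  | PInf, _ | _, PInf => Some PInf
  | MInf, _ | _, MInf => Some MInf
  end.

Definition eopp (x : ER) : ER :=
  match x with Fin a => Fin (- a) | PInf => MInf | MInf => PInf end.

(** Scalar multiple, with the convention 0 * (+-oo) = 0. *)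
Definition escal (c : R) (x : ER) : ER :=
  match x with
  | Fin a => Fin (c * a)
  | PInf => match Rlt_dec 0 c with left _ => PInf | right _ =>
              match Rlt_dec c 0 with left _ => MInf | right _ => Fin 0 end end
  | MInf => match Rlt_dec 0 c with left _ => MInf | right _ =>
              match Rlt_dec c 0 with left _ => PInf | right _ => Fin 0 end end
  end.

Definition fsum {A : Type} (g : A -> R) (l : list A) : R :=
  fold_right (fun a acc => g a + acc) 0 l.

Definition psums {A : Type} (g : A -> R) : R -> Prop :=
  fun x => exists l : list A, NoDup l /\ x = fsum g l.

Lemma psums_ne {A : Type} (g : A -> R) : exists x, psums g x.
Proof. exists 0. exists nil. split; [constructor | reflexivity]. Qed.

Definition sum_nn {A : Type} (g : A -> R) : ER :=
  match excluded_middle_informative (bound (psums g)) with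
  | left Hb => Fin (proj1_sig (completeness (psums g) Hb (psums_ne g)))
  | right _ => PInf
  end.

(** <p, X> = sum_a p_a X(a), as (positive part) - (negative part);
    [None] if both parts are infinite. *)
Definition inner {A : Type} (p X : A -> R) : option ER :=
  eadd (sum_nn (fun a => Rmax (p a * X a) 0))
       (eopp (sum_nn (fun a => Rmax (- (p a * X a)) 0))).

Definition sumj (n : nat) (g : nat -> R) : R :=
  fold_right (fun j acc => g j + acc) 0 (seq 0 n).

Definition is_prob {A : Type} (p : A -> R) : Prop :=
  (forall a, 0 <= p a) /\ sum_nn p = Fin 1.

Definition gen_entropy {A : Type} (h : A -> R -> R) (p : A -> R) : ER :=
  sum_nn (fun a => h a (p a)).

(** I(p) - sum_{j<n} theta_j <p, H_j>, [None] when undefined (oo - oo). *)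
Definition objective {A : Type} (h : A -> R -> R) (n : nat)
    (theta : nat -> R) (H : nat -> A -> R) (p : A -> R) : option ER :=
  fold_right
    (fun j acc =>
       match acc, inner p (H j) with
       | Some x, Some y => eadd x (escal (- theta j) y)
       | _, _ => None
       end)
    (Some (gen_entropy h p)) (seq 0 n).

Definition variational_principle {A : Type} (h : A -> R -> R) (n : nat)
    (theta : nat -> R) (H : nat -> A -> R) (pstar : A -> R) : Prop :=
  is_prob pstar /\
  exists r : R, objective h n theta H pstar = Some (Fin r) /\
    forall p : A -> R, is_prob p ->
      forall v : ER, objective h n theta H p = Some v -> ele v (Fin r).

Definition entropy_fun (h f : R -> R) : Prop :=
  (forall x, 0 <= x <= 1 -> limit1_in h (fun y => 0 <= y <= 1) (h x) x) /\
  (forall x y t, 0 <= x <= 1 -> 0 <= y <= 1 -> x <> y -> 0 < t < 1 ->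
     t * h x + (1 - t) * h y < h (t * x + (1 - t) * y)) /\
  h 0 = 0 /\ h 1 = 0 /\
  (forall u, 0 < u < 1 -> derivable_pt_lim h u (- f u)) /\
  (forall u, 0 < u <= 1 -> limit1_in f (fun y => 0 < y <= 1) (f u) u).

Definition finite_limit_at_0 (f : R -> R) : Prop :=
  limit1_in f (fun y => 0 < y <= 1) (f 0) 0.

(* Main.v *)
Require Import Defs.
From Stdlib Require Import Reals Lra List Classical ClassicalEpsilon FunctionalExtensionality.
Open Scope R_scope.

Lemma lim_use f D l x0 : limit1_in f D l x0 -> forall eps, 0 < eps ->
  exists d, 0 < d /\ forall x, D x -> Rabs (x - x0) < d -> Rabs (f x - l) < eps.
Proof.
  intros Hl eps He. destruct (Hl eps He) as [d [Hd Hx]]. exists d; split; auto.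
  intros x Dx Hx0. apply (Hx x). split; auto.
Qed.

Section Sums.
Context {A : Type}.

Lemma sum_nn_spec (g : A -> R) :
  (exists s, sum_nn g = Fin s /\ is_lub (psums g) s) \/ (~ bound (psums g) /\ sum_nn g = PInf).
Proof.
  unfold sum_nn. destruct excluded_middle_informative as [Hb|Hb].
  - left. destruct (completeness (psums g) Hb (psums_ne g)) as [s Hs]. simpl. eauto.
  - right. auto.
Qed.

Lemma sum_nn_Fin (g : A -> R) s : is_lub (psums g) s -> sum_nn g = Fin s.
Proof.
  intros H. destruct (sum_nn_spec g) as [[s' [E H']]|[Nb E]].
  - rewrite E. f_equal. eapply is_lub_u; eauto.
  - exfalso. apply Nb. exists s. apply H.
Qed.

Lemma sum_nn_PInf (g : A -> R) : ~ bound (psums g) -> sum_nn g = PInf.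
Proof.
  intros H. destruct (sum_nn_spec g) as [[s' [E H']]|[Nb E]]; auto.
  exfalso. apply H. exists s'. apply H'.
Qed.

Lemma sum_nn_notM (g : A -> R) : sum_nn g <> MInf.
Proof. destruct (sum_nn_spec g) as [[s' [E H']]|[Nb E]]; rewrite E; discriminate. Qed.

Lemma sum_nn_Fin_lub (g : A -> R) s : sum_nn g = Fin s -> is_lub (psums g) s.
Proof.
  intros E. destruct (sum_nn_spec g) as [[s' [E' H']]|[Nb E']]; rewrite E' in E; inversion E; subst; auto.
Qed.

Lemma fsum_le (g1 g2 : A -> R) l : (forall a, g1 a <= g2 a) -> fsum g1 l <= fsum g2 l.
Proof. intros H; induction l; simpl; [lra| specialize (H a); lra]. Qed.

Lemma fsum_plus (g1 g2 : A -> R) l : fsum (fun a => g1 a + g2 a) l = fsum g1 l + fsum g2 l.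
Proof. induction l; simpl; lra. Qed.

Lemma fsum_scal c (g : A -> R) l : fsum (fun a => c * g a) l = c * fsum g l.
Proof. induction l; simpl; [ring| rewrite IHl; ring]. Qed.

Lemma fsum_nn (g : A -> R) l : (forall a, 0 <= g a) -> 0 <= fsum g l.
Proof. intros H; induction l; simpl; [lra| specialize (H a); lra]. Qed.

Lemma fsum_app (g : A -> R) l1 l2 : fsum g (l1 ++ l2) = fsum g l1 + fsum g l2.
Proof. induction l1; simpl; lra. Qed.

Lemma fsum_incl (g : A -> R) l1 l : (forall a, 0 <= g a) -> NoDup l1 -> NoDup l ->
  incl l1 l -> fsum g l1 <= fsum g l.
Proof.
  intros Hg. revert l. induction l1 as [|x l1 IH]; intros l N1 N Hi; simpl.
  - apply fsum_nn; auto.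
  - assert (Hx : In x l) by (apply Hi; left; auto).
    destruct (in_split _ _ Hx) as [u [v E]]. subst l.
    inversion N1; subst.
    assert (Nuv : NoDup (u ++ v)) by (eapply NoDup_remove_1; eauto).
    assert (Hi2 : incl l1 (u ++ v)).
    { intros y Hy. assert (Hy' : In y (u ++ x :: v)) by (apply Hi; right; auto).
      apply in_app_or in Hy'. apply in_or_app. destruct Hy' as [Hy'|Hy']; auto.
      destruct Hy' as [<-|Hy']; auto. contradiction. }
    specialize (IH _ H2 Nuv Hi2).
    rewrite fsum_app in *. simpl. lra.
Qed.

Lemma union_ex (l1 l2 : list A) : NoDup l1 -> NoDup l2 ->
  exists l, NoDup l /\ incl l1 l /\ incl l2 l.
Proof.
  revert l1. induction l2 as [|x l2 IH]; intros l1 N1 N2.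
  - exists l1. split; auto. split; [apply incl_refl| intros y []].
  - inversion N2; subst.
    destruct (classic (In x l1)) as [Hx|Hx].
    + destruct (IH l1 N1 H2) as [l [N [I1 I2]]]. exists l. split; auto. split; auto.
      intros y [<-|Hy]; auto.
    + destruct (IH (x :: l1)) as [l [N [I1 I2]]]; auto. constructor; auto.
      exists l. split; auto. split.
      * intros y Hy. apply I1. right; auto.
      * intros y [<-|Hy]; auto. apply I1; left; auto.
Qed.

Lemma sum_nn_mono (g1 g2 : A -> R) : (forall a, g1 a <= g2 a) -> ele (sum_nn g1) (sum_nn g2).
Proof.
  intros H. destruct (sum_nn_spec g2) as [[s2 [E2 H2]]|[Nb E2]]; rewrite E2.
  - assert (Hu : is_upper_bound (psums g1) s2).
    { intros x [l [N ->]]. apply Rle_trans with (fsum g2 l). apply fsum_le; auto.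
      apply H2. exists l; auto. }
    destruct (sum_nn_spec g1) as [[s1 [E1 H1]]|[Nb E1]]; rewrite E1.
    + simpl. apply H1. auto.
    + exfalso. apply Nb. exists s2. auto.
  - destruct (sum_nn g1); simpl; auto.
Qed.

Definition eplus (x y : ER) : ER :=
  match x, y with Fin a, Fin b => Fin (a + b) | _, _ => PInf end.

Lemma sum_nn_add (g1 g2 : A -> R) : (forall a, 0 <= g1 a) -> (forall a, 0 <= g2 a) ->
  sum_nn (fun a => g1 a + g2 a) = eplus (sum_nn g1) (sum_nn g2).
Proof.
  intros P1 P2.
  destruct (sum_nn_spec g1) as [[s1 [E1 H1]]|[Nb1 E1]];
  destruct (sum_nn_spec g2) as [[s2 [E2 H2]]|[Nb2 E2]]; rewrite E1, E2; simpl.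
  - apply sum_nn_Fin. split.
    + intros x [l [N ->]]. rewrite fsum_plus.
      assert (fsum g1 l <= s1) by (apply H1; exists l; auto).
      assert (fsum g2 l <= s2) by (apply H2; exists l; auto). lra.
    + intros M HM.
      assert (K : forall l1 l2, NoDup l1 -> NoDup l2 -> fsum g1 l1 + fsum g2 l2 <= M).
      { intros l1 l2 N1 N2. destruct (union_ex l1 l2 N1 N2) as [l [N [I1 I2]]].
        assert (fsum g1 l1 <= fsum g1 l) by (apply fsum_incl; auto).
        assert (fsum g2 l2 <= fsum g2 l) by (apply fsum_incl; auto).
        assert (fsum (fun a => g1 a + g2 a) l <= M) by (apply HM; exists l; auto).
        rewrite fsum_plus in H3. lra. }
      assert (K2 : forall l2, NoDup l2 -> s1 <= M - fsum g2 l2).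
      { intros l2 N2. apply H1. intros x [l1 [N1 ->]]. specialize (K l1 l2 N1 N2). lra. }
      assert (s2 <= M - s1).
      { apply H2. intros x [l2 [N2 ->]]. specialize (K2 l2 N2). lra. }
      lra.
  - apply sum_nn_PInf. intros [M HM]. apply Nb2. exists M.
    intros x [l [N ->]]. apply Rle_trans with (fsum (fun a => g1 a + g2 a) l).
    + rewrite fsum_plus. pose proof (fsum_nn g1 l P1). lra.
    + apply HM. exists l; auto.
  - apply sum_nn_PInf. intros [M HM]. apply Nb1. exists M.
    intros x [l [N ->]]. apply Rle_trans with (fsum (fun a => g1 a + g2 a) l).
    + rewrite fsum_plus. pose proof (fsum_nn g2 l P2). lra.
    + apply HM. exists l; auto.
  - apply sum_nn_PInf. intros [M HM]. apply Nb1. exists M.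
    intros x [l [N ->]]. apply Rle_trans with (fsum (fun a => g1 a + g2 a) l).
    + rewrite fsum_plus. pose proof (fsum_nn g2 l P2). lra.
    + apply HM. exists l; auto.
Qed.

Lemma escal_pos c x : 0 < c -> escal c x = match x with Fin a => Fin (c * a) | _ => x end.
Proof. intros H; destruct x; simpl; auto; destruct Rlt_dec; auto; lra. Qed.
Lemma escal_neg c x : c < 0 -> escal c x = match x with Fin a => Fin (c * a) | PInf => MInf | MInf => PInf end.
Proof. intros H; destruct x; simpl; auto; destruct Rlt_dec; try lra; destruct Rlt_dec; auto; lra. Qed.
Lemma escal_zero x : escal 0 x = Fin 0.
Proof. destruct x; simpl. f_equal; ring. all: destruct (Rlt_dec 0 0); try lra; destruct (Rlt_dec 0 0); auto; lra. Qed.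

Lemma sum_nn_zero : sum_nn (fun _ : A => 0) = Fin 0.
Proof.
  apply sum_nn_Fin. split.
  - intros x [l [N ->]]. induction l; simpl; [lra|]. inversion N; subst. specialize (IHl H2). lra.
  - intros M HM. apply HM. exists nil. split; [constructor|reflexivity].
Qed.

Lemma sum_nn_scal c (g : A -> R) : 0 <= c ->
  sum_nn (fun a => c * g a) = escal c (sum_nn g).
Proof.
  intros Hc. destruct (Req_dec c 0) as [->|Hc0].
  - rewrite escal_zero. rewrite <- sum_nn_zero. f_equal. apply functional_extensionality; intros; ring.
  - assert (Hc' : 0 < c) by lra. rewrite escal_pos by auto.
    destruct (sum_nn_spec g) as [[s [E H]]|[Nb E]]; rewrite E.
    + apply sum_nn_Fin. split.
      * intros x [l [N ->]]. rewrite fsum_scal. apply Rmult_le_compat_l; [lra|]. apply H. exists l; auto.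
      * intros M HM. assert (s <= M / c).
        { apply H. intros x [l [N ->]]. assert (c * fsum g l <= M) by (rewrite <- fsum_scal; apply HM; exists l; auto).
          apply (Rmult_le_reg_l c); auto. field_simplify; lra. }
        apply (Rmult_le_reg_l (/c)). apply Rinv_0_lt_compat; auto.
        replace (/ c * (c * s)) with s by (field; lra). rewrite Rmult_comm. auto.
    + apply sum_nn_PInf. intros [M HM]. apply Nb. exists (M / c).
      intros x [l [N ->]]. assert (c * fsum g l <= M) by (rewrite <- fsum_scal; apply HM; exists l; auto).
      apply (Rmult_le_reg_l c); auto. field_simplify; lra.
Qed.

Definition shift (d : R) (x : ER) : ER := match x with Fin s => Fin (s + d) | _ => x end.

Lemma fsum_out (g g' : A -> R) a l : (forall x, x <> a -> g' x = g x) -> ~ In a l ->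
  fsum g' l = fsum g l.
Proof.
  intros H. induction l; simpl; auto. intros Hn. rewrite IHl by tauto. rewrite H; auto.
Qed.

Lemma fsum_in (g g' : A -> R) a l : (forall x, x <> a -> g' x = g x) -> NoDup l -> In a l ->
  fsum g' l = fsum g l + (g' a - g a).
Proof.
  intros H. induction l as [|x l IH]; simpl; [tauto|]. intros N [E|Hi]; inversion N; subst.
  - rewrite (fsum_out g g' a) by auto. lra.
  - assert (x <> a) by (intro; subst; contradiction). rewrite H by auto. rewrite IH by auto. lra.
Qed.

Lemma sum_nn_upd (g g' : A -> R) a : (forall x, 0 <= g x) -> (forall x, 0 <= g' x) ->
  (forall x, x <> a -> g' x = g x) -> sum_nn g' = shift (g' a - g a) (sum_nn g).
Proof.
  intros P P' Hx.
  assert (T1 : forall M, is_upper_bound (psums g) M -> is_upper_bound (psums g') (M + (g' a - g a))).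
  { intros M HM x [l [N ->]]. destruct (classic (In a l)) as [Hi|Hi].
    - rewrite (fsum_in g g' a) by auto. assert (fsum g l <= M) by (apply HM; exists l; auto). lra.
    - rewrite (fsum_out g g' a) by auto.
      assert (fsum g (a :: l) <= M) by (apply HM; exists (a :: l); split; auto; constructor; auto).
      simpl in H. pose proof (P' a). lra. }
  assert (T2 : forall M, is_upper_bound (psums g') M -> is_upper_bound (psums g) (M - (g' a - g a))).
  { intros M HM x [l [N ->]]. destruct (classic (In a l)) as [Hi|Hi].
    - assert (fsum g' l <= M) by (apply HM; exists l; auto).
      rewrite (fsum_in g g' a) in H by auto. lra.
    - assert (fsum g' (a :: l) <= M) by (apply HM; exists (a :: l); split; auto; constructor; auto).
      simpl in H. rewrite (fsum_out g g' a) in H by auto. pose proof (P a). lra. }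
  destruct (sum_nn_spec g) as [[s [E H]]|[Nb E]]; rewrite E; simpl.
  - apply sum_nn_Fin. split.
    + apply T1. apply H.
    + intros M HM. assert (s <= M - (g' a - g a)) by (apply H; apply T2; auto). lra.
  - apply sum_nn_PInf. intros [M HM]. apply Nb. exists (M - (g' a - g a)). apply T2; auto.
Qed.

Lemma sum_nn_upd2 (g g' : A -> R) a b : a <> b -> (forall x, 0 <= g x) -> (forall x, 0 <= g' x) ->
  (forall x, x <> a -> x <> b -> g' x = g x) ->
  sum_nn g' = shift ((g' a - g a) + (g' b - g b)) (sum_nn g).
Proof.
  intros Hab P P' Hx.
  set (g1 := fun x => if excluded_middle_informative (x = a) then g' a else g x).
  assert (P1 : forall x, 0 <= g1 x).
  { intros x; unfold g1; destruct excluded_middle_informative; auto. }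
  assert (E1 : sum_nn g1 = shift (g1 a - g a) (sum_nn g)).
  { apply sum_nn_upd; auto. intros x Hxa. unfold g1. destruct excluded_middle_informative; tauto. }
  assert (E2 : sum_nn g' = shift (g' b - g1 b) (sum_nn g1)).
  { apply sum_nn_upd; auto. intros x Hxb. unfold g1. destruct excluded_middle_informative; subst; auto. }
  assert (Ga : g1 a = g' a) by (unfold g1; destruct excluded_middle_informative; tauto).
  assert (Gb : g1 b = g b) by (unfold g1; destruct excluded_middle_informative; congruence).
  rewrite E2, E1, Ga, Gb.
  destruct (sum_nn g); simpl; auto. f_equal; ring.
Qed.

End Sums.

Definition pp (x : R) := Rmax x 0.
Lemma pp_nn x : 0 <= pp x. Proof. apply Rmax_r. Qed.
Lemma pp_diff x : pp x - pp (- x) = x.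
Proof. unfold pp, Rmax. repeat destruct Rle_dec; lra. Qed.
Lemma pp_pos x : 0 < x -> pp x = x /\ pp (-x) = 0.
Proof. unfold pp, Rmax; intros; repeat destruct Rle_dec; split; lra. Qed.
Lemma pp_negc x : x < 0 -> pp x = 0 /\ pp (-x) = -x.
Proof. unfold pp, Rmax; intros; repeat destruct Rle_dec; split; lra. Qed.

Ltac kill_dec :=
  repeat match goal with
  | |- context [Rlt_dec ?a ?b] => destruct (Rlt_dec a b); try lra
  | H : context [Rlt_dec ?a ?b] |- _ => destruct (Rlt_dec a b); try lra
  end.

Lemma key_er X Y P N x y v t :
  X <> MInf -> Y <> MInf -> P <> MInf -> N <> MInf ->
  eadd X (eopp Y) = Some x -> eadd P (eopp N) = Some y -> eadd x (escal (-t) y) = Some v ->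
  eadd (eplus X (eplus (escal (pp (-t)) P) (escal (pp t) N)))
       (eopp (eplus Y (eplus (escal (pp t) P) (escal (pp (-t)) N)))) = Some v.
Proof.
  intros HX HY HP HN E1 E2 E3.
  assert (Hc : (pp t = t /\ pp (-t) = 0 /\ 0 < t) \/ (pp t = 0 /\ pp (-t) = - t /\ t < 0) \/ (pp t = 0 /\ pp (-t) = 0 /\ t = 0)).
  { destruct (Rtotal_order t 0) as [Ht|[Ht|Ht]].
    - destruct (pp_negc t Ht); auto.
    - subst; unfold pp; rewrite Ropp_0, Rmax_left; lra.
    - destruct (pp_pos t Ht); auto. }
  destruct Hc as [[A1 [A2 Ht]]|[[A1 [A2 Ht]]|[A1 [A2 Ht]]]]; rewrite A1, A2;
  destruct X, Y, P, N; try congruence; simpl in *; kill_dec;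
  inversion E1; inversion E2; subst; simpl in *; kill_dec;
  inversion E3; subst; try reflexivity; try (f_equal; f_equal; ring).
Qed.

Section Obj.
Context {A : Type} (h : A -> R -> R) (theta : nat -> R) (H : nat -> A -> R).

Definition obj (js : list nat) (p : A -> R) : option ER :=
  fold_right
    (fun j acc =>
       match acc, inner p (H j) with
       | Some x, Some y => eadd x (escal (- theta j) y)
       | _, _ => None
       end)
    (Some (gen_entropy h p)) js.

Lemma obj_objective n p : objective h n theta H p = obj (seq 0 n) p.
Proof. reflexivity. Qed.

Definition Tg j (p : A -> R) a := pp (- theta j) * pp (p a * H j a) + pp (theta j) * pp (- (p a * H j a)).
Definition Tk j (p : A -> R) a := pp (theta j) * pp (p a * H j a) + pp (- theta j) * pp (- (p a * H j a)).

Definition Gt js (p : A -> R) a := fold_right (fun j acc => acc + Tg j p a) (h a (p a)) js.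
Definition Kt js (p : A -> R) a := fold_right (fun j acc => acc + Tk j p a) 0 js.

Lemma Tg_nn j p a : 0 <= Tg j p a.
Proof. unfold Tg. pose proof (pp_nn (-theta j)); pose proof (pp_nn (theta j)).
  pose proof (pp_nn (p a * H j a)); pose proof (pp_nn (-(p a * H j a))). nra. Qed.
Lemma Tk_nn j p a : 0 <= Tk j p a.
Proof. unfold Tk. pose proof (pp_nn (-theta j)); pose proof (pp_nn (theta j)).
  pose proof (pp_nn (p a * H j a)); pose proof (pp_nn (-(p a * H j a))). nra. Qed.

Lemma Gt_nn js p : (forall a, 0 <= h a (p a)) -> forall a, 0 <= Gt js p a.
Proof. intros Hh a. induction js; simpl; auto. pose proof (Tg_nn a0 p a). lra. Qed.
Lemma Kt_nn js p : forall a, 0 <= Kt js p a.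
Proof. intros a. induction js; simpl; [lra|]. pose proof (Tk_nn a0 p a). lra. Qed.

Lemma GK_diff js p a : Gt js p a - Kt js p a =
  h a (p a) - p a * fold_right (fun j acc => theta j * H j a + acc) 0 js.
Proof.
  induction js as [|j js IH]; simpl; [ring|].
  assert (E : Tg j p a - Tk j p a = - theta j * (p a * H j a)).
  { unfold Tg, Tk. pose proof (pp_diff (theta j)) as D1. pose proof (pp_diff (p a * H j a)) as D2.
    replace (pp (- theta j)) with (pp (theta j) - theta j) by lra.
    replace (pp (p a * H j a)) with (pp (-(p a * H j a)) + p a * H j a) by lra. ring. }
  replace (Gt js p a + Tg j p a - (Kt js p a + Tk j p a)) with
    ((Gt js p a - Kt js p a) + (Tg j p a - Tk j p a)) by ring.
  rewrite IH, E. ring.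
Qed.

Lemma sum_Tg j p : sum_nn (Tg j p) = eplus (escal (pp (- theta j)) (sum_nn (fun a => Rmax (p a * H j a) 0)))
   (escal (pp (theta j)) (sum_nn (fun a => Rmax (- (p a * H j a)) 0))).
Proof.
  unfold Tg. rewrite (sum_nn_add (fun a => pp (- theta j) * pp (p a * H j a))
     (fun a => pp (theta j) * pp (- (p a * H j a)))).
  - rewrite !sum_nn_scal by apply pp_nn. reflexivity.
  - intros a. pose proof (pp_nn (-theta j)); pose proof (pp_nn (p a * H j a)). nra.
  - intros a. pose proof (pp_nn (theta j)); pose proof (pp_nn (-(p a * H j a))). nra.
Qed.

Lemma sum_Tk j p : sum_nn (Tk j p) = eplus (escal (pp (theta j)) (sum_nn (fun a => Rmax (p a * H j a) 0)))
   (escal (pp (- theta j)) (sum_nn (fun a => Rmax (- (p a * H j a)) 0))).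
Proof.
  unfold Tk. rewrite (sum_nn_add (fun a => pp (theta j) * pp (p a * H j a))
     (fun a => pp (- theta j) * pp (- (p a * H j a)))).
  - rewrite !sum_nn_scal by apply pp_nn. reflexivity.
  - intros a. pose proof (pp_nn (theta j)); pose proof (pp_nn (p a * H j a)). nra.
  - intros a. pose proof (pp_nn (-theta j)); pose proof (pp_nn (-(p a * H j a))). nra.
Qed.

Lemma eplus_notM x y : eplus x y <> MInf.
Proof. destruct x, y; discriminate. Qed.
Lemma escal_nn_notM c x : 0 <= c -> x <> MInf -> escal c x <> MInf.
Proof. intros Hc Hx. destruct x; simpl; try discriminate; try congruence. kill_dec; discriminate. Qed.

Lemma decomp p : (forall a, 0 <= h a (p a)) -> forall js v, obj js p = Some v ->
  eadd (sum_nn (Gt js p)) (eopp (sum_nn (Kt js p))) = Some v.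
Proof.
  intros Hh js. induction js as [|j js IH]; intros v Ev.
  - simpl in Ev. inversion Ev; subst. unfold Kt; simpl. rewrite sum_nn_zero.
    unfold gen_entropy. unfold Gt; simpl.
    pose proof (sum_nn_notM (fun a => h a (p a))).
    destruct (sum_nn (fun a => h a (p a))); simpl; try congruence. f_equal; f_equal; ring.
  - simpl in Ev. destruct (obj js p) as [x|] eqn:Ex; [|discriminate].
    destruct (inner p (H j)) as [y|] eqn:Ey; [|discriminate].
    specialize (IH x eq_refl).
    assert (EG : Gt (j :: js) p = fun a => Gt js p a + Tg j p a) by reflexivity.
    assert (EK : Kt (j :: js) p = fun a => Kt js p a + Tk j p a) by reflexivity.
    rewrite EG, EK. rewrite !sum_nn_add; try apply Gt_nn; try apply Kt_nn; auto;
      try apply Tg_nn; try apply Tk_nn.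
    rewrite sum_Tg, sum_Tk.
    unfold inner in Ey.
    apply (key_er _ _ _ _ x y v (theta j)); auto using sum_nn_notM.
Qed.

End Obj.

Section Ana.
Variables (h f : R -> R).
Hypothesis hf : entropy_fun h f.
Hypothesis f0 : finite_limit_at_0 f.

Lemma h_nn x : 0 <= x <= 1 -> 0 <= h x.
Proof.
  destruct hf as [Hc [Hconc [H0 [H1 [Hd Hfc]]]]]. intros Hx.
  destruct (Req_dec x 0) as [->|Hx0]; [lra|]. destruct (Req_dec x 1) as [->|Hx1]; [lra|].
  pose proof (Hconc 1 0 x ltac:(lra) ltac:(lra) ltac:(lra) ltac:(lra)).
  rewrite H0, H1 in H. replace (x * 1 + (1 - x) * 0) with x in H by ring. lra.
Qed.

Lemma tangent_int x y : 0 < y < 1 -> 0 <= x <= 1 -> h x <= h y - f y * (x - y).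
Proof.
  destruct hf as [Hc [Hconc [H0 [H1 [Hd Hfc]]]]]. intros Hy Hx.
  destruct (Req_dec x y) as [->|Hxy]; [lra|].
  destruct (Rle_lt_dec (h x) (h y - f y * (x - y))) as [|Hk]; auto. exfalso.
  set (k := h x - h y + f y * (x - y)).
  assert (Kp : 0 < k) by (unfold k; lra).
  set (d := Rabs (x - y)).
  assert (Dp : 0 < d) by (unfold d; apply Rabs_pos_lt; lra).
  set (eps := k / (2 * d)).
  assert (Ep : 0 < eps) by (unfold eps; apply Rdiv_lt_0_compat; lra).
  destruct (Hd y Hy eps Ep) as [delta Hdel].
  pose proof (cond_pos delta) as Dlp.
  set (t := Rmin (1/2) (delta / (2 * d))).
  assert (Tp : 0 < t) by (unfold t; apply Rmin_pos; [lra| apply Rdiv_lt_0_compat; lra]).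
  assert (T1 : t <= 1/2) by (unfold t; apply Rmin_l).
  assert (T2 : t <= delta / (2 * d)) by (unfold t; apply Rmin_r).
  set (hh := t * (x - y)).
  assert (Hh0 : hh <> 0) by (unfold hh; intro E; apply Rmult_integral in E; destruct E; lra).
  assert (Ahh : Rabs hh = t * d) by (unfold hh, d; rewrite Rabs_mult, Rabs_pos_eq by lra; auto).
  assert (Hlt : Rabs hh < delta).
  { rewrite Ahh. assert (t * d <= delta / (2 * d) * d) by (apply Rmult_le_compat_r; lra).
    replace (delta / (2 * d) * d) with (delta / 2) in H by (field; lra). lra. }
  specialize (Hdel hh Hh0 Hlt).
  pose proof (Hconc x y t Hx ltac:(lra) Hxy ltac:(lra)) as Cv.
  replace (t * x + (1 - t) * y) with (y + hh) in Cv by (unfold hh; ring).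
  set (D := h (y + hh) - h y) in *.
  assert (E1 : D + f y * hh = (D / hh - - f y) * hh) by (field; auto).
  assert (E2 : Rabs (D + f y * hh) < eps * (t * d)).
  { rewrite E1, Rabs_mult, Ahh. apply Rmult_lt_compat_r; auto. apply Rmult_lt_0_compat; lra. }
  assert (E3 : eps * (t * d) = t * (k / 2)) by (unfold eps; field; lra).
  rewrite E3 in E2. apply Rabs_def2 in E2. destruct E2 as [E2 _].
  unfold D, hh in *. unfold k in *. nra.
Qed.

Lemma f_cont y : 0 <= y <= 1 -> limit1_in f (fun z => 0 < z <= 1) (f y) y.
Proof.
  destruct hf as [Hc [Hconc [H0 [H1 [Hd Hfc]]]]]. intros Hy.
  destruct (Req_dec y 0) as [->|Hy0]; [apply f0|]. apply Hfc. lra.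
Qed.

Lemma tangent x y : 0 <= y <= 1 -> 0 <= x <= 1 -> h x <= h y - f y * (x - y).
Proof.
  pose proof hf as hf'.
  destruct hf' as [Hc [Hconc [H0 [H1 [Hd Hfc]]]]]. intros Hy Hx.
  destruct (Rle_lt_dec (h x) (h y - f y * (x - y))) as [|Hk]; auto. exfalso.
  set (k := h x - (h y - f y * (x - y))).
  assert (Kp : 0 < k) by (unfold k; lra).
  destruct (lim_use _ _ _ _ (Hc y Hy) (k/3) ltac:(lra)) as [d1 [D1 L1]].
  destruct (lim_use _ _ _ _ (f_cont y Hy) (k/3) ltac:(lra)) as [d2 [D2 L2]].
  set (d3 := k / (3 * (Rabs (f y) + 1))).
  assert (D3 : 0 < d3) by (unfold d3; apply Rdiv_lt_0_compat; [lra|]; pose proof (Rabs_pos (f y)); lra).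
  set (m := Rmin (Rmin d1 d2) (Rmin d3 (1/2)) / 2).
  assert (Mp : 0 < m) by (unfold m; assert (0 < Rmin (Rmin d1 d2) (Rmin d3 (1/2))) by (repeat apply Rmin_pos; lra); lra).
  assert (M1 : m < d1 /\ m < d2 /\ m < d3 /\ m <= 1/4).
  { unfold m. pose proof (Rmin_l (Rmin d1 d2) (Rmin d3 (1/2))). pose proof (Rmin_r (Rmin d1 d2) (Rmin d3 (1/2))).
    pose proof (Rmin_l d1 d2). pose proof (Rmin_r d1 d2). pose proof (Rmin_l d3 (1/2)). pose proof (Rmin_r d3 (1/2)).
    lra. }
  set (z := if Rle_dec y (1/2) then y + m else y - m).
  assert (Z : 0 < z < 1 /\ Rabs (z - y) = m).
  { unfold z; destruct Rle_dec.
    - split; [lra|]. replace (y + m - y) with m by ring. apply Rabs_pos_eq; lra.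
    - split; [lra|]. replace (y - m - y) with (- m) by ring. rewrite Rabs_Ropp. apply Rabs_pos_eq; lra. }
  destruct Z as [Zi Zd].
  pose proof (tangent_int x z Zi Hx) as T.
  specialize (L1 z ltac:(lra) ltac:(lra)). specialize (L2 z ltac:(lra) ltac:(lra)).
  assert (B1 : Rabs ((f z - f y) * (x - z)) <= Rabs (f z - f y)).
  { rewrite Rabs_mult. assert (Rabs (x - z) <= 1) by (apply Rabs_le; lra).
    pose proof (Rabs_pos (f z - f y)). nra. }
  assert (B2 : Rabs (f y * (z - y)) < k / 3).
  { rewrite Rabs_mult, Zd. pose proof (Rabs_pos (f y)).
    assert (Rabs (f y) * m <= Rabs (f y) * d3) by (apply Rmult_le_compat_l; lra).
    assert (Rabs (f y) * d3 < k / 3).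
    { unfold d3. apply (Rmult_lt_reg_r (3 * (Rabs (f y) + 1))); [lra|].
      field_simplify; [nra| lra]. }
    lra. }
  apply Rabs_def2 in L1. pose proof L2 as L2'. apply Rabs_def2 in L2.
  pose proof (Rle_abs ((f z - f y) * (x - z))). pose proof (Rle_abs (-((f z - f y) * (x - z)))). rewrite Rabs_Ropp in *. apply Rabs_def2 in B2.
  assert (E : f z * (x - z) = (f z - f y) * (x - z) + f y * (x - y) - f y * (z - y)) by ring.
  unfold k in *. lra.
Qed.

End Ana.

Section Prob.
Context {A : Type}.

Lemma prob_lub (p : A -> R) : is_prob p -> is_lub (psums p) 1.
Proof. intros [_ E]. apply sum_nn_Fin_lub; auto. Qed.

Lemma prob_le1 (p : A -> R) a : is_prob p -> p a <= 1.
Proof.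
  intros Hp. pose proof (prob_lub p Hp) as [U _].
  assert (fsum p (a :: nil) <= 1) by (apply U; exists (a :: nil); split; auto; constructor; auto; constructor).
  simpl in H. lra.
Qed.

Lemma prob_two (p : A -> R) a b : is_prob p -> a <> b -> p a + p b <= 1.
Proof.
  intros Hp Hab. pose proof (prob_lub p Hp) as [U _].
  assert (fsum p (a :: b :: nil) <= 1).
  { apply U; exists (a :: b :: nil); split; auto. constructor. intros [E|[]]; auto. constructor; auto; constructor. }
  simpl in H. lra.
Qed.

Lemma prob_ex (p : A -> R) : is_prob p -> exists b, 0 < p b.
Proof.
  intros Hp. apply NNPP. intros Hn.
  assert (Z : forall b, p b <= 0) by (intros b; apply Rnot_lt_le; intro; apply Hn; eauto).
  pose proof (prob_lub p Hp) as [_ L].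
  assert (1 <= 0).
  { apply L. intros x [l [N ->]]. induction l; simpl; [lra|]. inversion N; subst. specialize (Z a). specialize (IHl H2). lra. }
  lra.
Qed.
End Prob.

Lemma eadd_shift X Y u w : eadd (shift u X) (eopp (shift w Y)) = option_map (shift (u - w)) (eadd X (eopp Y)).
Proof. destruct X, Y; simpl; auto. f_equal; f_equal; ring. Qed.

Lemma final_er SG SK SGs SKs v r c1 c2 :
  SG <> MInf -> SK <> MInf -> SGs <> MInf -> SKs <> MInf ->
  eadd SG (eopp SK) = Some v -> eadd SGs (eopp SKs) = Some (Fin r) ->
  ele (eplus (eplus (eplus SG SKs) (Fin c1)) (Fin c2)) (eplus (eplus (eplus SGs SK) (Fin c2)) (Fin c1)) ->
  ele v (Fin r).
Proof.
  intros; destruct SG, SK, SGs, SKs; try congruence; simpl in *; inversion H3; inversion H4; subst;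
  simpl in *; auto; lra.
Qed.

Section Shift.
Context {A : Type} (h : A -> R -> R) (theta : nat -> R) (H : nat -> A -> R).

Lemma obj_shift (p p' : A -> R) dI (Dj : nat -> R) :
  sum_nn (fun a => h a (p' a)) = shift dI (sum_nn (fun a => h a (p a))) ->
  (forall j, inner p' (H j) = option_map (shift (Dj j)) (inner p (H j))) ->
  forall js r, obj h theta H js p = Some (Fin r) ->
  obj h theta H js p' = Some (Fin (r + dI - fold_right (fun j acc => theta j * Dj j + acc) 0 js)).
Proof.
  intros Hh Hi js. induction js as [|j js IH]; intros r Ev.
  - simpl in *. unfold gen_entropy in *. inversion Ev. rewrite Hh, H1. simpl. f_equal; f_equal; ring.
  - simpl in Ev |- *. destruct (obj h theta H js p) as [x|]; [|discriminate].
    destruct (inner p (H j)) as [y|] eqn:Ey; [|discriminate].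
    destruct x as [x0| |]; [| destruct y; simpl in Ev; kill_dec; discriminate
                               | destruct y; simpl in Ev; kill_dec; discriminate ].
    rewrite (IH x0 eq_refl), Hi, Ey. simpl.
    destruct y as [y0| |]; simpl in Ev |- *.
    + inversion Ev; subst. f_equal; f_equal; ring.
    + kill_dec; try discriminate. assert (theta j = 0) by lra. rewrite H0.
      inversion Ev; subst. f_equal; f_equal; ring.
    + kill_dec; try discriminate. assert (theta j = 0) by lra. rewrite H0.
      inversion Ev; subst. f_equal; f_equal; ring.
Qed.

Lemma fold_lin a b e js :
  fold_right (fun j acc => theta j * (e * H j a - e * H j b) + acc) 0 js =
  e * fold_right (fun j acc => theta j * H j a + acc) 0 js - e * fold_right (fun j acc => theta j * H j b + acc) 0 js.
Proof. induction js; simpl; [ring|]. rewrite IHjs. ring. Qed.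
End Shift.

Definition Th {A : Type} (theta : nat -> R) (H : nat -> A -> R) n a :=
  fold_right (fun j acc => theta j * H j a + acc) 0 (seq 0 n).

Lemma Th_sumj {A : Type} theta (H : nat -> A -> R) n a : sumj n (fun j => theta j * H j a) = Th theta H n a.
Proof. reflexivity. Qed.

Lemma dir21 (A : Type) (h f : A -> R -> R) (hf : forall a, entropy_fun (h a) (f a))
  (f0_finite : forall a, finite_limit_at_0 (f a)) (n : nat) (H : nat -> A -> R)
  (theta : nat -> R) (pstar : A -> R) (pstar_prob : is_prob pstar) r
  (E : objective h n theta H pstar = Some (Fin r)) alpha (A0 : A -> Prop)
  (Hi : forall a, ~ A0 a -> f a (pstar a) = - alpha - Th theta H n a)
  (Hii : forall a, A0 a -> pstar a = 0)
  (Hiii : forall a, A0 a -> f a 0 + Th theta H n a >= - alpha) :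
  forall p, is_prob p -> forall v, objective h n theta H p = Some v -> ele v (Fin r).
Proof.
  intros p Pp v Ev. rewrite obj_objective in Ev, E.
  assert (Rp : forall a, 0 <= p a <= 1) by (intros a; split; [apply Pp| apply prob_le1; auto]).
  assert (Rs : forall a, 0 <= pstar a <= 1) by (intros a; split; [apply pstar_prob| apply prob_le1; auto]).
  assert (Np : forall a, 0 <= h a (p a)) by (intros a; apply (h_nn _ _ (hf a)); auto).
  assert (Ns : forall a, 0 <= h a (pstar a)) by (intros a; apply (h_nn _ _ (hf a)); auto).
  pose proof (decomp h theta H p Np (seq 0 n) v Ev) as D1.
  pose proof (decomp h theta H pstar Ns (seq 0 n) (Fin r) E) as D2.
  set (js := seq 0 n) in *.
  assert (Tan : forall a, h a (p a) - h a (pstar a) <= (alpha + Th theta H n a) * (p a - pstar a)).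
  { intros a. destruct (classic (A0 a)) as [Ha|Ha].
    - pose proof (Hii a Ha) as Z. pose proof (Hiii a Ha) as W.
      pose proof (tangent _ _ (hf a) (f0_finite a) (p a) 0 ltac:(lra) (Rp a)) as T.
      destruct (hf a) as [_ [_ [H0 _]]]. rewrite Z, H0. rewrite H0 in T.
      pose proof (Rp a). nra.
    - pose proof (Hi a Ha) as Z.
      pose proof (tangent _ _ (hf a) (f0_finite a) (p a) (pstar a) (Rs a) (Rp a)) as T.
      rewrite Z in T. nra. }
  set (L := fun a => Gt h theta H js p a + Kt theta H js pstar a + pp (- alpha) * p a + pp alpha * pstar a).
  set (R' := fun a => Gt h theta H js pstar a + Kt theta H js p a + pp alpha * p a + pp (- alpha) * pstar a).
  assert (LR : forall a, L a <= R' a).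
  { intros a. unfold L, R'. pose proof (GK_diff h theta H js p a) as G1.
    pose proof (GK_diff h theta H js pstar a) as G2. pose proof (Tan a) as T.
    unfold Th in T. fold js in T.
    pose proof (pp_diff alpha). replace (pp (- alpha)) with (pp alpha - alpha) by lra. nra. }
  pose proof (sum_nn_mono L R' LR) as M.
  assert (NG : forall q, (forall a, 0 <= h a (q a)) -> forall a, 0 <= Gt h theta H js q a) by (intros; apply Gt_nn; auto).
  assert (NK : forall q a, 0 <= Kt theta H js q a) by (intros; apply Kt_nn).
  assert (Sp : forall c, 0 <= c -> sum_nn (fun a => c * p a) = Fin (c * 1)).
  { intros c Hc. rewrite sum_nn_scal by auto. destruct Pp as [_ ->]. reflexivity. }
  assert (Ss : forall c, 0 <= c -> sum_nn (fun a => c * pstar a) = Fin (c * 1)).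
  { intros c Hc. rewrite sum_nn_scal by auto. destruct pstar_prob as [_ ->]. reflexivity. }
  assert (Pp' : forall c a, 0 <= c -> 0 <= c * p a) by (intros; pose proof (Rp a); nra).
  assert (Ps' : forall c a, 0 <= c -> 0 <= c * pstar a) by (intros; pose proof (Rs a); nra).
  assert (EL : sum_nn L = eplus (eplus (eplus (sum_nn (Gt h theta H js p)) (sum_nn (Kt theta H js pstar)))
                 (Fin (pp (-alpha) * 1))) (Fin (pp alpha * 1))).
  { unfold L. rewrite (sum_nn_add (fun a => Gt h theta H js p a + Kt theta H js pstar a + pp (- alpha) * p a)
        (fun a => pp alpha * pstar a)).
    rewrite (sum_nn_add (fun a => Gt h theta H js p a + Kt theta H js pstar a) (fun a => pp (- alpha) * p a)).
    rewrite (sum_nn_add (Gt h theta H js p) (Kt theta H js pstar)).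
    rewrite Sp, Ss by apply pp_nn. reflexivity.
    all: intros a; try apply Pp'; try apply Ps'; try apply pp_nn; auto.
    all: pose proof (NG p Np a); pose proof (NK pstar a); pose proof (Pp' (pp (-alpha)) a (pp_nn _)); lra. }
  assert (ER : sum_nn R' = eplus (eplus (eplus (sum_nn (Gt h theta H js pstar)) (sum_nn (Kt theta H js p)))
                 (Fin (pp alpha * 1))) (Fin (pp (-alpha) * 1))).
  { unfold R'. rewrite (sum_nn_add (fun a => Gt h theta H js pstar a + Kt theta H js p a + pp alpha * p a)
        (fun a => pp (-alpha) * pstar a)).
    rewrite (sum_nn_add (fun a => Gt h theta H js pstar a + Kt theta H js p a) (fun a => pp alpha * p a)).
    rewrite (sum_nn_add (Gt h theta H js pstar) (Kt theta H js p)).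
    rewrite Sp, Ss by apply pp_nn. reflexivity.
    all: intros a; try apply Pp'; try apply Ps'; try apply pp_nn; auto.
    all: pose proof (NG pstar Ns a); pose proof (NK p a); pose proof (Pp' (pp alpha) a (pp_nn _)); lra. }
  rewrite EL, ER in M.
  eapply final_er; eauto using sum_nn_notM.
Qed.

Lemma step12 (A : Type) (h f : A -> R -> R) (hf : forall a, entropy_fun (h a) (f a))
  (f0_finite : forall a, finite_limit_at_0 (f a)) (n : nat) (H : nat -> A -> R)
  (theta : nat -> R) (pstar : A -> R) (pstar_prob : is_prob pstar) r
  (E : objective h n theta H pstar = Some (Fin r))
  (Max : forall p, is_prob p -> forall v, objective h n theta H p = Some v -> ele v (Fin r))
  a b (Hab : a <> b) e (He : 0 < e < pstar b) :
  f b (pstar b - e) - f a (pstar a + e) <= Th theta H n a - Th theta H n b.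
Proof.
  set (y := pstar a) in *. set (z := pstar b) in *.
  assert (Rs : forall x, 0 <= pstar x <= 1) by (intros x; split; [apply pstar_prob| apply prob_le1; auto]).
  assert (Yz : y + z <= 1) by (apply prob_two; auto).
  assert (Ry : 0 <= y) by apply Rs.
  set (p' := fun x => if excluded_middle_informative (x = a) then y + e
                      else if excluded_middle_informative (x = b) then z - e else pstar x).
  assert (Pa : p' a = y + e) by (unfold p'; destruct excluded_middle_informative; tauto).
  assert (Pb : p' b = z - e) by (unfold p'; destruct excluded_middle_informative; [congruence|];
                                 destruct excluded_middle_informative; tauto).
  assert (Po : forall x, x <> a -> x <> b -> p' x = pstar x)
    by (intros x H1 H2; unfold p'; destruct excluded_middle_informative; [tauto|];
        destruct excluded_middle_informative; tauto).
  assert (Rp : forall x, 0 <= p' x <= 1).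
  { intros x. destruct (classic (x = a)) as [->|Ha]; [rewrite Pa; lra|].
    destruct (classic (x = b)) as [->|Hb]; [rewrite Pb; lra|]. rewrite Po; auto. }
  assert (comp : forall c : A -> R -> R, (forall x v, 0 <= v <= 1 -> 0 <= c x v) ->
     sum_nn (fun x => c x (p' x)) = shift ((c a (y + e) - c a y) + (c b (z - e) - c b z))
        (sum_nn (fun x => c x (pstar x)))).
  { intros c Hc. rewrite (sum_nn_upd2 (fun x => c x (pstar x)) (fun x => c x (p' x)) a b Hab).
    - rewrite Pa, Pb. reflexivity.
    - intros x; apply Hc; auto.
    - intros x; apply Hc; auto.
    - intros x H1 H2. rewrite Po; auto. }
  assert (Pp : is_prob p').
  { split; [intros x; apply Rp|]. pose proof (comp (fun _ v => v)) as C. cbv beta in C.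
    change (sum_nn (fun x => p' x)) with (sum_nn p') in C.
    change (sum_nn (fun x => pstar x)) with (sum_nn pstar) in C.
    rewrite C by (intros; lra). destruct pstar_prob as [_ ->]. simpl. f_equal; ring. }
  assert (Hh : sum_nn (fun x => h x (p' x)) = shift ((h a (y + e) - h a y) + (h b (z - e) - h b z))
                 (sum_nn (fun x => h x (pstar x)))).
  { apply comp. intros x v Hv. apply (h_nn _ _ (hf x)); auto. }
  assert (Hi : forall j, inner p' (H j) = option_map (shift (e * H j a - e * H j b)) (inner pstar (H j))).
  { intros j. unfold inner.
    pose proof (comp (fun x v => Rmax (v * H j x) 0)) as C1. cbv beta in C1.
    pose proof (comp (fun x v => Rmax (- (v * H j x)) 0)) as C2. cbv beta in C2.
    rewrite C1, C2 by (intros; apply Rmax_r). rewrite eadd_shift. f_equal. f_equal.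
    pose proof (pp_diff ((y + e) * H j a)). pose proof (pp_diff (y * H j a)).
    pose proof (pp_diff ((z - e) * H j b)). pose proof (pp_diff (z * H j b)). unfold pp in *. lra. }
  rewrite obj_objective in E.
  pose proof (obj_shift h theta H pstar p' _ _ Hh Hi (seq 0 n) r E) as E'.
  cbv beta in E'. rewrite fold_lin in E'. rewrite <- obj_objective in E'.
  pose proof (Max p' Pp _ E') as M. simpl in M. fold (Th theta H n a) (Th theta H n b) in M.
  pose proof (tangent _ _ (hf a) (f0_finite a) y (y + e) ltac:(lra) ltac:(lra)) as T1.
  pose proof (tangent _ _ (hf b) (f0_finite b) z (z - e) ltac:(lra) ltac:(lra)) as T2.
  apply (Rmult_le_reg_l e); [lra|]. nra.
Qed.

Lemma key12 (A : Type) (h f : A -> R -> R) (hf : forall a, entropy_fun (h a) (f a))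
  (f0_finite : forall a, finite_limit_at_0 (f a)) (n : nat) (H : nat -> A -> R)
  (theta : nat -> R) (pstar : A -> R) (pstar_prob : is_prob pstar) r
  (E : objective h n theta H pstar = Some (Fin r))
  (Max : forall p, is_prob p -> forall v, objective h n theta H p = Some v -> ele v (Fin r))
  a b (Hb : 0 < pstar b) :
  f b (pstar b) + Th theta H n b <= f a (pstar a) + Th theta H n a.
Proof.
  destruct (classic (a = b)) as [->|Hab]; [lra|].
  pose proof (step12 A h f hf f0_finite n H theta pstar pstar_prob r E Max a b Hab) as St.
  set (y := pstar a) in *. set (z := pstar b) in *.
  assert (Rs : forall x, 0 <= pstar x <= 1) by (intros x; split; [apply pstar_prob| apply prob_le1; auto]).
  assert (Yz : y + z <= 1) by (apply prob_two; auto).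
  assert (Ry : 0 <= y) by apply Rs.
  destruct (Rle_lt_dec (f b z + Th theta H n b) (f a y + Th theta H n a)) as [|Hk]; auto. exfalso.
  set (k := f b z + Th theta H n b - (f a y + Th theta H n a)).
  assert (Kp : 0 < k) by (unfold k; lra).
  destruct (lim_use _ _ _ _ (f_cont _ _ (hf b) (f0_finite b) z ltac:(lra)) (k/2) ltac:(lra)) as [d1 [D1 L1]].
  destruct (lim_use _ _ _ _ (f_cont _ _ (hf a) (f0_finite a) y ltac:(lra)) (k/2) ltac:(lra)) as [d2 [D2 L2]].
  set (e := Rmin z (Rmin d1 d2) / 2).
  assert (Ep : 0 < e /\ e < z /\ e < d1 /\ e < d2).
  { unfold e. pose proof (Rmin_l z (Rmin d1 d2)). pose proof (Rmin_r z (Rmin d1 d2)).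
    pose proof (Rmin_l d1 d2). pose proof (Rmin_r d1 d2).
    assert (0 < Rmin z (Rmin d1 d2)) by (repeat apply Rmin_pos; lra). lra. }
  specialize (St e ltac:(lra)).
  assert (A1 : Rabs (z - e - z) < d1) by (replace (z - e - z) with (- e) by ring; rewrite Rabs_Ropp, Rabs_pos_eq; lra).
  assert (A2 : Rabs (y + e - y) < d2) by (replace (y + e - y) with e by ring; rewrite Rabs_pos_eq; lra).
  specialize (L1 (z - e) ltac:(lra) A1). specialize (L2 (y + e) ltac:(lra) A2).
  apply Rabs_def2 in L1. apply Rabs_def2 in L2. unfold k in *. lra.
Qed.

Theorem theorem2
  (A : Type)
  (A_countable : exists e : A -> nat, forall x y, e x = e y -> x = y)
  (h f : A -> R -> R)
  (hf : forall a, entropy_fun (h a) (f a))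
  (f0_finite : forall a, finite_limit_at_0 (f a))
  (n : nat) (H : nat -> A -> R)
  (H_bdd : forall j, (j < n)%nat -> exists c, forall a, c <= H j a)
  (theta : nat -> R) (pstar : A -> R)
  (pstar_prob : is_prob pstar)
  (obj_finite : exists r, objective h n theta H pstar = Some (Fin r)) :
  variational_principle h n theta H pstar <->
  exists (alpha : R) (A0 : A -> Prop),
    (forall a, ~ A0 a ->
       f a (pstar a) = - alpha - sumj n (fun j => theta j * H j a)) /\
    (forall a, A0 a -> pstar a = 0) /\
    (forall a, A0 a ->
       f a 0 + sumj n (fun j => theta j * H j a) >= - alpha).
Proof.
  destruct obj_finite as [r E]. split.
  - intros [_ [r0 [E0 Max]]]. rewrite E in E0. inversion E0; subst r0.
    pose proof (key12 A h f hf f0_finite n H theta pstar pstar_prob r E Max) as K.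
    destruct (prob_ex pstar pstar_prob) as [b0 Hb0].
    exists (- (f b0 (pstar b0) + Th theta H n b0)), (fun a => pstar a = 0).
    split; [|split].
    + intros a Ha. rewrite Th_sumj.
      assert (0 < pstar a) by (destruct pstar_prob as [P _]; specialize (P a); lra).
      pose proof (K a b0 Hb0). pose proof (K b0 a H0). lra.
    + auto.
    + intros a Ha. rewrite Th_sumj. pose proof (K a b0 Hb0). rewrite Ha in H0. lra.
  - intros [alpha [A0 [Hi [Hii Hiii]]]]. split; auto. exists r. split; auto.
    eapply dir21; eauto.
Qed.
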